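(* Let $\mathfrak{g}$ be a nilpotent Lie algebra over $\mathbb{R}$ of dimension $2p+1$ admitting a contact form, i.e. a linear form $\omega\in\mathfrak{g}^*$ with $\omega\wedge(d\omega)^p\neq 0$, where $d\omega(X,Y)=-\omega([X,Y])$. Then the quotient Lie algebra $\mathfrak{g}/Z(\mathfrak{g})$ (where $Z(\mathfrak{g})$ is the center of $\mathfrak{g}$) is a symplectic Lie algebra.
   Context: A symplectic Lie algebra is a Lie algebra $\mathfrak{h}$ equipped with a nondegenerate skew-symmetric bilinear form $\theta$ which is a $2$-cocycle, i.e. $\theta([X,Y],Z)+\theta([Y,Z],X)+\theta([Z,X],Y)=0$ for all $X,Y,Z\in\mathfrak{h}$. *)

(* Defs.v *)
From HB Require Import structures.
From mathcomp Require Import all_boot all_order all_algebra.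
From mathcomp Require Import fingroup perm.
From mathcomp Require Import reals.
Set Implicit Arguments. Unset Strict Implicit. Unset Printing Implicit Defensive.
Import Order.TTheory GRing.Theory Num.Theory.
Local Open Scope ring_scope.

Section LieDefs.
Variables (R : realType) (V : vectType R).

Definition bilinear_map (W : lmodType R) (b : V -> V -> W) : Prop :=
  (forall a x y z, b (a *: x + y) z = a *: b x z + b y z) /\
  (forall a x y z, b x (a *: y + z) = a *: b x y + b x z).

Definition lie_bracket (br : V -> V -> V) : Prop :=
  bilinear_map br /\ (forall x, br x x = 0) /\
  (forall x y z, br x (br y z) + br y (br z x) + br z (br x y) = 0).

(* nilpotent: all left-normed brackets [x1,[x2,...,[xn,y]]] of some fixed
   length vanish, i.e. some term C^n g of the lower central series is 0 *)
Definition lie_nilpotent (br : V -> V -> V) : Prop :=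
  exists n : nat, forall (xs : seq V) (y : V),
    size xs = n -> foldr (fun x acc => br x acc) y xs = 0.

Definition lie_center (br : V -> V -> V) (z : V) : Prop :=
  forall x, br z x = 0.

Definition lin_form (w : V -> R) : Prop :=
  forall a x y, w (a *: x + y) = a * w x + w y.

Definition dform (br : V -> V -> V) (w : V -> R) (x y : V) : R := - w (br x y).

(* (w /\ (dw)^p)(v_0, ..., v_2p), up to a nonzero normalising constant:
   the full antisymmetrisation of w(v0) dw(v1,v2) ... dw(v_{2p-1},v_{2p}). *)
Definition contact_top (br : V -> V -> V) (w : V -> R) (p : nat)
    (v : 'I_(2 * p).+1 -> V) : R :=
  \sum_(s : 'S_(2 * p).+1)
    (-1) ^+ (odd_perm s) * w (v (s ord0)) *
    \prod_(i < p) dform br w (v (s (inord (2 * i + 1)))) (v (s (inord (2 * i + 2)))).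

Definition contact_form (br : V -> V -> V) (p : nat) (w : V -> R) : Prop :=
  lin_form w /\ exists v : 'I_(2 * p).+1 -> V, @contact_top br w p v != 0.

End LieDefs.

Section SympDefs.
Variables (R : realType) (Q : vectType R).

Definition symplectic_form (brQ : Q -> Q -> Q) (th : Q -> Q -> R) : Prop :=
  bilinear_map (W := R^o) th /\
  (forall x y, th x y = - th y x) /\
  (forall x, (forall y, th x y = 0) -> x = 0) /\
  (forall x y z, th (brQ x y) z + th (brQ y z) x + th (brQ z x) y = 0).

End SympDefs.

(* Main.v *)
Require Import Defs.
From HB Require Import structures.
From mathcomp Require Import all_boot all_order all_algebra.
From mathcomp Require Import fingroup perm.
From mathcomp Require Import reals.
From mathcomp Require Import ring lra zify.
From Stdlib Require Import Classical ClassicalEpsilon FunctionalExtensionality.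
Import GRing.Theory Num.Theory.
Local Open Scope ring_scope.
Set Implicit Arguments. Unset Strict Implicit.

Lemma dbl0 (M : zmodType) (a : M) : a = a + a -> a = 0.
Proof. by move=> h; apply: (addrI a); rewrite addr0 -h. Qed.

Section Aux.
Variables (R : realType) (V : vectType R) (br : V -> V -> V) (w : V -> R).
Hypothesis Hlie : lie_bracket br.
Hypothesis Hw : lin_form w.

Lemma brDl x y z : br (x + y) z = br x z + br y z.
Proof. by have [[H _] _] := Hlie; have := H 1 x y z; rewrite !scale1r. Qed.
Lemma br0l z : br 0 z = 0.
Proof.
have [[H _] _] := Hlie; have := H 1 0 0 z; rewrite scale1r addr0 scale1r ; exact: dbl0.
Qed.
Lemma br0r z : br z 0 = 0.
Proof.
have [[_ H] _] := Hlie; have := H 1 z 0 0; rewrite scale1r addr0 scale1r ; exact: dbl0.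
Qed.
Lemma brZl a x z : br (a *: x) z = a *: br x z.
Proof. have [[H _] _] := Hlie; by rewrite -[a *: x]addr0 H br0l addr0. Qed.
Lemma brDr x y z : br x (y + z) = br x y + br x z.
Proof. by have [[_ H] _] := Hlie; have := H 1 x y z; rewrite !scale1r. Qed.
Lemma brZr a x y : br x (a *: y) = a *: br x y.
Proof. have [[_ H] _] := Hlie; by rewrite -[a *: y]addr0 H br0r addr0. Qed.
Lemma brC x y : br y x = - br x y.
Proof.
have [_ [H0 _]] := Hlie; apply/eqP; rewrite -addr_eq0 addrC.
by have := H0 (x + y); rewrite brDl !brDr !H0 add0r addr0 => ->.
Qed.
Lemma brNl x y : br (- x) y = - br x y.
Proof. by rewrite -scaleN1r brZl scaleN1r. Qed.

Lemma wD x y : w (x + y) = w x + w y.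
Proof. by have := Hw 1 x y; rewrite scale1r mul1r. Qed.
Lemma wZ a x : w (a *: x) = a * w x.
Proof.
have w0 : w 0 = 0.
  by have := Hw 1 0 0; rewrite scale1r addr0 mul1r; exact: dbl0.
by rewrite -[a *: x]addr0 Hw w0 addr0.
Qed.
Lemma wN x : w (- x) = - w x.
Proof. by rewrite -scaleN1r wZ mulN1r. Qed.
End Aux.

Definition upd {T : finType} {V : Type} (u : T -> V) (k : T) (y : V) :=
  fun j => if j == k then y else u j.

Section Gsec.
Variables (R : realType) (V : vectType R) (br : V -> V -> V) (w : V -> R) (p : nat).
Hypothesis Hlie : lie_bracket br.
Hypothesis Hw : lin_form w.

Local Notation n := (2 * p).+1.

Definition Gt (u : 'I_n -> V) : R :=
  w (u ord0) * \prod_(i < p) dform br w (u (inord (2 * i + 1))) (u (inord (2 * i + 2))).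

Lemma contact_topE v : contact_top br w v =
  \sum_(s : 'S_n) (-1) ^+ (odd_perm s) * Gt (fun k => v (s k)).
Proof. by apply: eq_bigr => s _; rewrite /Gt mulrA. Qed.

Lemma inordE (m : nat) (k : 'I_n) : (m < n)%N -> ((inord m : 'I_n) == k) = (m == k).
Proof. by move=> hm; rewrite -val_eqE /= inordK. Qed.

Lemma Gt_lin (u : 'I_n -> V) (k : 'I_n) (a : R) (y1 y2 : V) :
  Gt (upd u k (a *: y1 + y2)) = a * Gt (upd u k y1) + Gt (upd u k y2).
Proof.
have kn := ltn_ord k.
case: (eqVneq (k : nat) 0%N) => [k0|k0].
  have -> : k = ord0 by apply: val_inj.
  have E : forall y, Gt (upd u ord0 y) = w y * \prod_(i < p)
     dform br w (u (inord (2 * i + 1))) (u (inord (2 * i + 2))).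
    move=> y; rewrite /Gt /upd eqxx; congr (_ * _); apply: eq_bigr => i _.
    have ip := ltn_ord i.
    by rewrite !inordE ?addn1 ?addn2 //; lia.
  by rewrite !E (wD Hw) (wZ Hw); ring.
have hi0 : ((k - 1) %/ 2 < p)%N by lia.
pose i0 : 'I_p := Ordinal hi0.
pose D y := dform br w (upd u k y (inord (2 * i0 + 1))) (upd u k y (inord (2 * i0 + 2))).
pose P := \prod_(i < p | i != i0) dform br w (u (inord (2 * i + 1))) (u (inord (2 * i + 2))).
have E : forall y, Gt (upd u k y) = w (u ord0) * (D y * P).
  move=> y; rewrite /Gt (bigD1 i0) //=; congr (_ * (_ * _)).
    by rewrite /upd ifN // -val_eqE /= eq_sym.
  apply: eq_bigr => i ne.
  have ne' : (i : nat) <> ((k - 1) %/ 2)%N.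
    by move=> h; move/eqP: ne; apply; apply: val_inj.
  have ip := ltn_ord i.
  rewrite /upd !inordE; try lia.
  rewrite !ifN //; apply/eqP; lia.
have HD : D (a *: y1 + y2) = a * D y1 + D y2.
  have ip := ltn_ord i0.
  rewrite /D /upd /dform !inordE /=; try lia.
  have [h|h] : (2 * ((k - 1) %/ 2) + 1 = k \/ 2 * ((k - 1) %/ 2) + 2 = k)%N by lia.
    have h2 : ((2 * ((k - 1) %/ 2) + 2)%N == k) = false by apply/eqP; lia.
    by rewrite h eqxx h2 (brDl Hlie) (brZl Hlie) (wD Hw) (wZ Hw); ring.
  have h2 : ((2 * ((k - 1) %/ 2) + 1)%N == k) = false by apply/eqP; lia.
  rewrite h eqxx h2.
  by rewrite (brDr Hlie) (brZr Hlie) (wD Hw) (wZ Hw); ring.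
by rewrite !E HD; ring.
Qed.

End Gsec.

Section Fsec.
Variables (R : realType) (V : vectType R) (br : V -> V -> V) (w : V -> R) (p : nat).
Hypothesis Hlie : lie_bracket br.
Hypothesis Hw : lin_form w.

Local Notation n := (2 * p).+1.
Local Notation F := (@contact_top R V br w p).

Lemma upd_perm (v : 'I_n -> V) (s : 'S_n) j y :
  (fun k => upd v j y (s k)) = upd (fun k => v (s k)) (s^-1%g j) y.
Proof.
apply: functional_extensionality => k; rewrite /upd.
by rewrite -(inj_eq (@perm_inj _ s)) permKV.
Qed.

Lemma F_lin (v : 'I_n -> V) j a y1 y2 :
  F (upd v j (a *: y1 + y2)) = a * F (upd v j y1) + F (upd v j y2).
Proof.
rewrite !contact_topE mulr_sumr -big_split; apply: eq_bigr => s _ /=.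
by rewrite !upd_perm (Gt_lin Hlie Hw) mulrDr mulrCA.
Qed.

End Fsec.

Section Fsec2.
Variables (R : realType) (V : vectType R) (br : V -> V -> V) (w : V -> R) (p : nat).
Hypothesis Hlie : lie_bracket br.
Hypothesis Hw : lin_form w.

Local Notation n := (2 * p).+1.
Local Notation F := (@contact_top R V br w p).

Lemma F_sum (v : 'I_n -> V) j (I : finType) (c : I -> R) (X : I -> V) :
  F (upd v j (\sum_i c i *: X i)) = \sum_i c i * F (upd v j (X i)).
Proof.
apply: (big_rec2 (fun y1 y2 => F (upd v j y1) = y2)).
  apply: dbl0; have := F_lin Hlie Hw v j 1 0 0; by rewrite scale1r addr0 mul1r.
by move=> i y1 y2 _ <-; rewrite (F_lin Hlie Hw).
Qed.

Lemma F_zero_all (m : nat) (X : 'I_m -> V)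
  (Hspan : forall y, exists c : 'I_m -> R, y = \sum_k c k *: X k)
  (Hbase : forall f : 'I_n -> 'I_m, F (fun j => X (f j)) = 0) :
  forall v, F v = 0.
Proof.
suff H : forall N v, (forall j : 'I_n, (N <= j)%N -> exists k, v j = X k) -> F v = 0.
  move=> v; apply: (H n v) => j hj; have := ltn_ord j; lia.
elim=> [|N IH] v hv.
  have [f hf] : exists f : 'I_n -> 'I_m, forall j, v j = X (f j).
    by apply: (@fin_all_exists _ (fun _ => 'I_m) (fun j k => v j = X k)) => j; apply: hv.
  have -> : v = (fun j => X (f j)) by apply: functional_extensionality.
  exact: Hbase.
case: (ltnP N n) => hN; last first.
  by apply: IH => j hj; have := ltn_ord j; lia.
pose jN : 'I_n := Ordinal hN.
have -> : v = upd v jN (v jN).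
  by apply: functional_extensionality => j; rewrite /upd; case: eqP => // ->.
have [c ->] := Hspan (v jN).
rewrite F_sum big1 // => k _.
rewrite IH ?mulr0 // => j hj; rewrite /upd.
case: eqP => [_|ne]; first by exists k.
apply: hv; suff : (j : nat) <> N by lia.
by move=> h; apply: ne; apply: val_inj.
Qed.

End Fsec2.

Section Fsec3.
Variables (R : realType) (V : vectType R) (br : V -> V -> V) (w : V -> R) (p : nat).
Hypothesis Hlie : lie_bracket br.
Hypothesis Hw : lin_form w.

Local Notation n := (2 * p).+1.
Local Notation F := (@contact_top R V br w p).

Lemma F_rep (u : 'I_n -> V) a b : a != b -> u a = u b -> F u = 0.
Proof.
move=> ab uab.
suff h : F u = - F u by lra.
rewrite !contact_topE [in LHS](reindex_inj (@mulIg _ (tperm a b))) -sumrN.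
apply: eq_bigr => s _.
rewrite odd_permM odd_tperm ab signr_addb expr1 mulrN1.
have -> : (fun k => u ((s * tperm a b)%g k)) = (fun k => u (s k)).
  apply: functional_extensionality => k; rewrite permM.
  by case: tpermP => [->|->|] //; rewrite uab.
by rewrite mulNr.
Qed.

Lemma Gt_K (u : 'I_n -> V) k : k != ord0 -> (forall t, w (br (u k) t) = 0) -> Gt br w u = 0.
Proof.
move=> k0 HK.
have k1 : (0 < k)%N by rewrite lt0n; move: k0; apply: contra => /eqP h; apply/eqP/val_inj.
have kn := ltn_ord k.
have hi0 : ((k - 1) %/ 2 < p)%N by lia.
pose i0 : 'I_p := Ordinal hi0.
rewrite /Gt (bigD1 i0) //=.
have [h|h] : (2 * ((k - 1) %/ 2) + 1 = k \/ 2 * ((k - 1) %/ 2) + 2 = k)%N by lia.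
  have e : (inord (2 * i0 + 1) : 'I_n) = k by apply: val_inj; rewrite /= inordK //; lia.
  by rewrite e /dform HK oppr0 mul0r mulr0.
have e : (inord (2 * i0 + 2) : 'I_n) = k by apply: val_inj; rewrite /= inordK //; lia.
by rewrite e /dform (brC Hlie) (wN Hw) HK oppr0 oppr0 mul0r mulr0.
Qed.

Lemma F_K (u : 'I_n -> V) a b : a != b ->
  (forall t, w (br (u a) t) = 0) -> (forall t, w (br (u b) t) = 0) -> F u = 0.
Proof.
move=> ab Ka Kb; rewrite contact_topE big1 // => s _.
case: (eqVneq (s^-1%g a) ord0) => ha.
  rewrite (@Gt_K _ (s^-1%g b)) ?mulr0 //; last by rewrite permKV.
  by rewrite -ha; apply: contra ab => /eqP /perm_inj ->.
by rewrite (@Gt_K _ (s^-1%g a)) ?mulr0 //; rewrite permKV.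
Qed.

End Fsec3.

Section Main.
Variables (R : realType) (V : vectType R) (br : V -> V -> V) (w : V -> R) (p : nat).
Hypothesis Hlie : lie_bracket br.
Hypothesis Hnil : lie_nilpotent br.
Hypothesis Hdim : \dim (fullv : {vspace V}) = (2 * p).+1.
Hypothesis Hcontact : contact_form br p w.

Local Notation n := (2 * p).+1.
Local Notation F := (@contact_top R V br w p).

Lemma center_nz : exists z : V, z != 0 /\ forall t, br z t = 0.
Proof.
have H : forall N, (forall (xs : seq V) y, size xs = N -> foldr (fun x acc => br x acc) y xs = 0) ->
   (forall y : V, y = 0) \/ exists z : V, z != 0 /\ forall t, br z t = 0.
  elim=> [|N IH] H.
    by left => y; exact: (H [::] y).
  case: (classic (exists (xs : seq V) y, size xs = N /\ foldr (fun x acc => br x acc) y xs != 0)).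
    move=> [xs [y [hs hne]]]; right; exists (foldr (fun x acc => br x acc) y xs); split => // t.
    by rewrite (brC Hlie); have := H (t :: xs) y; rewrite /= hs => /(_ erefl) ->; rewrite oppr0.
  move=> nex; apply: IH => xs y hs; apply/eqP/negPn/negP => hne; apply: nex; by exists xs, y.
have [N HN] := Hnil.
case: (H N HN) => // triv.
have : (fullv : {vspace V}) = 0%VS.
  by apply/vspaceP => v; rewrite memvf memv0 (triv v) eqxx.
by move=> e; move: Hdim; rewrite e dimv0.
Qed.

Lemma radical_central x : (forall y, w (br x y) = 0) -> forall y, br x y = 0.
Proof.
move=> Kx; case: (classic (forall y, br x y = 0)) => // nc.
have [Hw [v0 Hv0]] := Hcontact.
have w0 : w 0 = 0 by have := wZ Hw 0 0; rewrite scale0r mul0r.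
have [z [z0 hz]] := center_nz.
have Kz : forall t, w (br z t) = 0 by move=> t; rewrite hz.
have hfree : free [:: x; z].
  rewrite free_cons seq1_free z0 andbT span_seq1.
  apply/vlineP => -[c hx]; apply: nc => y; by rewrite hx (brZl Hlie) hz scaler0.
pose U := (<<[:: x; z]>>)%VS.
have dU : \dim U = 2%N by move: hfree; rewrite /free => /eqP.
have dUn : (2 <= n)%N by rewrite -Hdim -dU; apply: dimvS; apply: subvf.
pose C := (U^C)%VS.
pose B := vbasis C.
pose L := x :: z :: (B : seq V).
have sL : size L = n by rewrite /= size_tuple dimv_compl Hdim dU; lia.
have spL : (<<L>>)%VS = fullv.
  by rewrite (span_cat [:: x; z] B) (span_basis (vbasisP C)) addv_complf.
pose X := fun k : 'I_(size L) => L`_k.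
have Hspan : forall y, exists c : 'I_(size L) -> R, y = \sum_k c k *: X k.
  move=> y; exists (fun k => coord (in_tuple L) k y).
  by rewrite {1}(coord_span (X := in_tuple L) (v := y)) // spL memvf.
have Hbase : forall f : 'I_n -> 'I_(size L), F (fun j => X (f j)) = 0.
  move=> f.
  case: (classic (exists a b, a != b /\ f a = f b)) => [[a [b [ab e]]]|nex].
    by apply: (@F_rep R V br w p _ a b ab); rewrite /= e.
  have finj : injective f.
    move=> a b e; case: (eqVneq a b) => // ab; exfalso; apply: nex; by exists a, b.
  have onto := inj_card_onto finj.
  have cd : (#|'I_(size L)| <= #|'I_n|)%N by rewrite !card_ord sL.
  have [a ea] := codomP (onto cd (@Ordinal (size L) 0 isT)).
  have [b eb] := codomP (onto cd (@Ordinal (size L) 1 isT)).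
  apply: (@F_K _ _ _ _ _ Hlie Hw _ a b).
  - by apply/eqP => e; move: eb; rewrite -e -ea => /(congr1 val).
  - by rewrite /X -ea.
  - by rewrite /X -eb.
have := F_zero_all Hlie Hw Hspan Hbase v0.
by move/eqP: Hv0.
Qed.

End Main.

Theorem mainTheorem1 (R : realType) (V : vectType R) (br : V -> V -> V)
    (p : nat) (w : V -> R)
    (Hlie : lie_bracket br) (Hnil : lie_nilpotent br)
    (Hdim : \dim (fullv : {vspace V}) = (2 * p).+1)
    (Hcontact : contact_form br p w)
    (Q : vectType R) (brQ : Q -> Q -> Q) (pi : {linear V -> Q})
    (Hsurj : forall q : Q, exists x : V, pi x = q)
    (Hker : forall x : V, pi x = 0 <-> lie_center br x)
    (Hhom : forall x y : V, pi (br x y) = brQ (pi x) (pi y)) :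
  exists th : Q -> Q -> R, symplectic_form brQ th.
Proof.
have [Hw _] := Hcontact.
have [sec secE] : exists sec : Q -> V, forall q, pi (sec q) = q.
  exists (fun q => proj1_sig (constructive_indefinite_description _ (Hsurj q))).
  by move=> q; exact: (proj2_sig (constructive_indefinite_description _ (Hsurj q))).
pose th q1 q2 := dform br w (sec q1) (sec q2).
have key : forall x y, th (pi x) (pi y) = - w (br x y).
  move=> x y; rewrite /th /dform.
  have c1 : lie_center br (sec (pi x) - x).
    by apply/Hker/eqP; rewrite raddfB subr_eq0; apply/eqP; exact: secE.
  have c2 : lie_center br (sec (pi y) - y).
    by apply/Hker/eqP; rewrite raddfB subr_eq0; apply/eqP; exact: secE.
  have gen : forall u v c d, lie_center br c -> lie_center br d -> br (c + u) (d + v) = br u v.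
    move=> u v c d hc hd.
    by rewrite (brDl Hlie) hc add0r (brDr Hlie) (brC Hlie d u) hd oppr0 add0r.
  by have := gen x y _ _ c1 c2; rewrite !subrK => ->.
exists th; split; [|split; [|split]].
- split=> a q1 q2 q3.
  + have [x1 <-] := Hsurj q1; have [x2 <-] := Hsurj q2; have [x3 <-] := Hsurj q3.
    rewrite -linearP !key (brDl Hlie) (brZl Hlie) (wD Hw) (wZ Hw).
    by rewrite opprD -mulrN.
  + have [x1 <-] := Hsurj q1; have [x2 <-] := Hsurj q2; have [x3 <-] := Hsurj q3.
    rewrite -linearP !key (brDr Hlie) (brZr Hlie) (wD Hw) (wZ Hw).
    by rewrite opprD -mulrN.
- move=> q1 q2; have [x1 <-] := Hsurj q1; have [x2 <-] := Hsurj q2.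
  by rewrite !key (brC Hlie x1 x2) (wN Hw) opprK.
- move=> q; have [x <-] := Hsurj q => H.
  apply/Hker => y; apply: (radical_central Hlie Hnil Hdim Hcontact) => t.
  by apply/eqP; rewrite -oppr_eq0 -key H.
- move=> q1 q2 q3.
  have [x1 <-] := Hsurj q1; have [x2 <-] := Hsurj q2; have [x3 <-] := Hsurj q3.
  rewrite -!Hhom !key (brC Hlie x3 (br x1 x2)) (brC Hlie x1 (br x2 x3)) (brC Hlie x2 (br x3 x1)).
  rewrite !(wN Hw) !opprK.
  have [_ [_ J]] := Hlie.
  have := congr1 w (J x1 x2 x3).
  have w0 : w 0 = 0 by have := wZ Hw 0 0; rewrite scale0r mul0r.
  rewrite !(wD Hw) w0.
  lra.
Qed.
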